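(* Let $(\Omega,\mathcal A,\mu)$ be a probability space admitting a learning rule that is consistent under every learning problem $(\mu,\eta)$ with $\eta:\Omega\to[0,1]$ an $\mathcal A$-measurable regression function. Then the Maharam type of the measure algebra $(\mathcal A,\mu\circ\Delta)$ does not exceed the cardinality of $\Omega$.
   Context: For a measurable space $(\Omega,\mathcal A)$, a learning rule $\mathcal L$ assigns to every $n\ge1$, labelled sample $\sigma\in\Omega^n\times\{0,1\}^n$ and $x\in\Omega$ a label $\mathcal L_n(\sigma)(x)\in\{0,1\}$ (measurably in $(\sigma,x)$), so that $\mathcal L_n(\sigma)$ is a measurable classifier $\Omega\to\{0,1\}$. A probability measure $\mu$ on $\Omega$ together with a measurable $\eta:\Omega\to[0,1]$ determines a probability measure $\tilde\mu$ on $\Omega\times\{0,1\}$ by $\tilde\mu(A\times\{1\})=\int_A\eta\,d\mu$, $\tilde\mu(A\times\{0\})=\int_A(1-\eta)\,d\mu$. The error is $\mathrm{err}_{\tilde\mu}(\mathcal L_n)=(\tilde\mu^n\otimes\tilde\mu)\{(\sigma,x,y):\mathcal L_n(\sigma)(x)\ne y\}$ and the Bayes error is $\ell^*(\tilde\mu)=\inf_T\tilde\mu\{(x,y):T(x)\ne y\}$ over measurable classifiers $T$; the rule is consistent under $(\mu,\eta)$ if $\mathrm{err}_{\tilde\mu}(\mathcal L_n)\to\ell^*(\tilde\mu)$. The measure algebra $(\mathcal A,\mu\circ\Delta)$ is the quotient of $\mathcal A$ by the ideal of $\mu$-null sets, with metric $d(A,B)=\mu(A\Delta B)$. Its Maharam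 type is the smallest cardinality of a subset of this Boolean algebra generating a subalgebra that is dense for this metric. *)

(* Defs.v *)
From HB Require Import structures.
From mathcomp Require Import all_boot all_order all_algebra.
From mathcomp Require Import all_classical all_reals all_analysis.
Set Implicit Arguments. Unset Strict Implicit. Unset Printing Implicit Defensive.
Import Order.TTheory GRing.Theory Num.Theory.
Local Open Scope classical_set_scope.
Local Open Scope ring_scope.

Definition learning_rule d (T : measurableType d) :=
  forall n : nat, n.-tuple (T * bool)%type -> T -> bool.

Definition is_learning_rule d (T : measurableType d)
  (L : learning_rule T) : Prop :=
  forall n : nat,
    measurable_fun setT (fun p : (n.-tuple (T * bool) * T)%type => L n p.1 p.2).

Definition joint_law d (T : measurableType d) (R : realType)
  (mu : probability T R) (eta : T -> R) (P : probability (T * bool)%type R) : Prop :=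
  forall A : set T, measurable A ->
    (P (A `*` [set true]) = \int[mu]_(x in A) (eta x)%:E)%E /\
    (P (A `*` [set false]) = \int[mu]_(x in A) (1 - eta x)%:E)%E.

Definition is_power_measure d (T : measurableType d) (R : realType) (n : nat)
  (P : probability (T * bool)%type R) (Q : probability (n.-tuple (T * bool)%type) R) : Prop :=
  forall A : 'I_n -> set (T * bool)%type, (forall i, measurable (A i)) ->
    Q [set t | forall i, A i (tnth t i)] = (\prod_(i < n) P (A i))%E.

Definition rule_error d (T : measurableType d) (R : realType)
  (L : learning_rule T) (n : nat) (P : probability (T * bool)%type R)
  (Q : probability (n.-tuple (T * bool)%type) R) : \bar R :=
  (Q \x P)%E [set p : (n.-tuple (T * bool) * (T * bool))%type | L n p.1 p.2.1 != p.2.2].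

Definition bayes_error d (T : measurableType d) (R : realType)
  (P : probability (T * bool)%type R) : \bar R :=
  ereal_inf [set P [set p : (T * bool)%type | h p.1 != p.2] |
             h in [set h : T -> bool | measurable_fun setT h]].

Definition universally_consistent d (T : measurableType d) (R : realType)
  (mu : probability T R) (L : learning_rule T) : Prop :=
  forall eta : T -> R, measurable_fun setT eta ->
    (forall x, 0 <= eta x <= 1) ->
  forall P : probability (T * bool)%type R, joint_law mu eta P ->
  forall Q : forall n : nat, probability (n.-tuple (T * bool)%type) R,
    (forall n, @is_power_measure _ T R n P (Q n)) ->
    (fun n => @rule_error _ T R L n P (Q n)) @ \oo --> bayes_error P.

Definition gen_algebra T (G : set (set T)) : set (set T) :=
  \bigcap_(F in [set F : set (set T) | [/\ G `<=` F, F setT,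
      (forall A, F A -> F (~` A)) & (forall A B, F A -> F B -> F (A `|` B))]]) F.

(* G (a family of measurable sets, i.e. of representatives of elements of the
   measure algebra) generates a subalgebra that is dense for d(A,B)=mu(A Delta B). *)
Definition generates_dense_subalgebra d (T : measurableType d) (R : realType)
  (mu : probability T R) (G : set (set T)) : Prop :=
  G `<=` measurable /\
  forall A : set T, measurable A -> forall e : R, 0 < e ->
    exists2 B, gen_algebra G B & (mu ((A `\` B) `|` (B `\` A)) < e%:E)%E.

(* Maharam type of the measure algebra (A, mu o Delta) is <= |S|:
   there is a generating set of cardinality <= |S| (the Maharam type being the
   least such cardinality). *)
Definition maharam_type_le d (T : measurableType d) (R : realType)
  (mu : probability T R) U (S : set U) : Prop :=
  exists G : set (set T), generates_dense_subalgebra mu G /\ (G #<= S)%card.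

(* Main.v *)
Require Import Defs.
From HB Require Import structures.
From mathcomp Require Import all_boot all_order all_algebra.
From mathcomp Require Import all_classical all_reals all_analysis.
From mathcomp Require Import measurable_realfun lra.
Module PQ.
Set Implicit Arguments. Unset Strict Implicit. Unset Printing Implicit Defensive.
Import Order.TTheory GRing.Theory Num.Theory.
Local Open Scope classical_set_scope.
Local Open Scope ring_scope.

Section Qcons.
Context d (T : measurableType d) (R : realType) (P : probability (T * bool)%type R).
Local Notation X := (T * bool)%type.

Lemma consP n : (fun p : (X * n.-tuple X)%type => [tuple of p.1 :: p.2]) \in mfun.
Proof. by rewrite inE; apply: measurable_cons. Qed.

Fixpoint Qf (n : nat) : probability (n.-tuple X) R :=
  match n with
  | 0 => [the probability _ R of @dirac _ _ [tuple] R]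
  | n'.+1 => [the probability _ R of distribution (P \x Qf n')%E (mfun_Sub (consP n'))]
  end.

Lemma cyl_measurable n (A : 'I_n -> set X) : (forall i, measurable (A i)) ->
  measurable [set t : n.-tuple X | forall i, A i (tnth t i)].
Proof.
move=> mA.
have -> : [set t : n.-tuple X | forall i, A i (tnth t i)] =
   \bigcap_(i in [set: 'I_n]) ((fun t : n.-tuple X => tnth t i) @^-1` A i).
  by apply/seteqP; split => t /= H i => [_|]; [exact: H|exact: H].
apply: fin_bigcap_measurable; first exact: finite_finset.
move=> i _; rewrite -[Z in measurable Z]setTI; exact: measurable_tnth.
Qed.

Lemma Qf_power n : is_power_measure P (Qf n).
Proof.
elim: n => [|n IH] A mA.
  rewrite big_ord0 /=.
  have -> : [set t : 0.-tuple X | forall i, A i (tnth t i)] = setT.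
    by apply/seteqP; split => // t _ [].
  by rewrite probability_setT.
rewrite big_ord_recl /= /distribution /pushforward /=.
have -> : (fun p : (X * n.-tuple X)%type => [tuple of p.1 :: p.2]) @^-1`
   [set t : n.+1.-tuple X | forall i, A i (tnth t i)] =
   A ord0 `*` [set t : n.-tuple X | forall i, A (lift ord0 i) (tnth t i)].
  apply/seteqP; split => [[x t]|[x t]] /=.
    move=> H; split; first exact: (H ord0).
    by move=> i; have := H (lift ord0 i); rewrite tnthS.
  move=> [H0 H] i; have [j ij|->] := unliftP ord0 i; last by [].
  by rewrite ij tnthS.
rewrite (product_measure1E P (Qf n) (mA ord0) (cyl_measurable (fun i : 'I_n => mA (lift ord0 i)))).
by rewrite -(IH (fun i : 'I_n => A (lift ord0 i))).
Qed.

End Qcons.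

End PQ.
Import PQ.
Unset Implicit Arguments. Set Strict Implicit.

Module PD.
Unset Printing Implicit Defensive.
Import Order.TTheory GRing.Theory Num.Theory.
Local Open Scope classical_set_scope.
Local Open Scope ring_scope.

Section Dense.
Context d (T : measurableType d) (R : realType) (mu : probability T R).
Variable L : learning_rule T.
Hypothesis hL : is_learning_rule L.
Hypothesis hC : universally_consistent mu L.

Lemma rule_sec_measurable n (s : n.-tuple (T * bool)) :
  measurable [set x | L n s x].
Proof.
have mf : measurable_fun setT (fun x : T => L n (s, x).1 (s, x).2).
  exact: (measurableT_comp (hL n) (pair1_measurable s)).
have := mf measurableT [set true] I; rewrite setTI.
by congr measurable; apply/seteqP; split => x /=.
Qed.

Lemma err_measurable n :
  measurable [set p : (n.-tuple (T * bool) * (T * bool))%type | L n p.1 p.2.1 != p.2.2].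
Proof.
set g1 := fun p : (n.-tuple (T * bool) * (T * bool))%type => L n p.1 p.2.1.
have mg1 : measurable_fun setT g1.
  apply: (measurableT_comp (hL n) (f := fun p => L n p.1 p.2) (g := fun p : (n.-tuple (T * bool) * (T * bool))%type => (p.1, p.2.1))).
  apply: measurable_fun_pair => //.
  exact: (measurableT_comp measurable_fst measurable_snd).
have mg2 : measurable_fun setT (fun p : (n.-tuple (T * bool) * (T * bool))%type => p.2.2).
  exact: (measurableT_comp measurable_snd measurable_snd).
have mg : measurable_fun setT (fun p => if g1 p then ~~ p.2.2 else p.2.2).
  apply: measurable_fun_ifT => //; exact: measurable_neg.
have := mg measurableT [set true] I; rewrite setTI.
congr measurable; apply/seteqP; split => p /=; rewrite /g1;
  by case: (L n p.1 p.2.1); case: (p.2.2).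
Qed.

Lemma dense_rule A : measurable A -> forall e : R, 0 < e ->
  exists n (s : n.-tuple (T * bool)),
    (mu ((A `\` [set x | L n s x]) `|` ([set x | L n s x] `\` A)) < e%:E)%E.
Proof.
move=> mA e e0.
pose h := fun x : T => x \in A.
have mh : measurable_fun setT h.
  apply: (measurable_fun_bool true); rewrite setTI.
  have -> : h @^-1` [set true] = A.
    by apply/seteqP; split => x /=; rewrite /h; [move/idP; rewrite in_setE|move=> Ax; apply/idP; rewrite in_setE].
  exact: mA.
pose f := fun x : T => (x, h x).
have mf : f \in mfun by apply/mem_set; exact: measurable_fun_pair.
pose P := [the probability _ R of distribution mu (mfun_Sub mf)].
have PE B : P B = mu (f @^-1` B) by [].
have jl : joint_law mu (\1_A) P.
  move=> B mB; rewrite !PE; split.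
    rewrite integral_indic //.
    congr (mu _); apply/seteqP; split => x /=; rewrite /h.
      by case=> Bx /idP; rewrite in_setE.
    by case=> Ax Bx; split => //; apply/idP; rewrite in_setE.
  rewrite (eq_integral (fun x => (\1_(~` A) x)%:E)); last first.
    by move=> x _; rewrite indicC indicE; case: (x \in A); rewrite /= ?subrr ?subr0.
  rewrite integral_indic //; last exact: measurableC.
  congr (mu _); apply/seteqP; split => x /=; rewrite /h.
    by case=> Bx /negbT; rewrite notin_setE.
  by case=> Ax Bx; split => //; apply/negbTE; rewrite notin_setE.
have eta_m : measurable_fun setT (\1_A : T -> R) by exact: measurable_indic.
have eta01 : forall x, 0 <= (\1_A : T -> R) x <= 1.
  by move=> x; rewrite indicE; case: (x \in A); rewrite /= ?lexx ?ler01.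
have := hC (\1_A) eta_m eta01 P jl (Qf P) (Qf_power P).
have -> : bayes_error P = 0%E.
  apply/eqP; rewrite eq_le; apply/andP; split.
    apply: ge_ereal_inf; exists 0%E => //; exists h; first exact: mh.
    rewrite PE; rewrite (_ : _ @^-1` _ = set0) ?measure0 //.
    by apply/seteqP; split => x //=; rewrite /f /= eqxx.
  by apply: le_ereal_inf_tmp => _ [g _ <-]; exact: measure_ge0.
move/fine_cvgP => [finN cv].
have ev := cvgr_lt 0 cv e e0; have {}ev := ev eventually_filter.
have [N _ HN] : \forall n \near \oo, (rule_error L P (Qf P n) \is a fin_num) /\
   (fine (rule_error L P (Qf P n)) < e).
  by near=> n; split; [near: n; exact: finN|near: n; exact: ev].
have [finE ltE] := HN N (leqnn N).
have : (rule_error L P (Qf P N) < e%:E)%E by rewrite -(fineK finE) lte_fin.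
rewrite /rule_error /product_measure1 /=.
set E := [set p | _].
have mE : measurable E := err_measurable N.
case: (pselect (exists s, (P (xsection E s) < e%:E)%E)) => [[s Hs] _|nH].
  exists N, s; move: Hs; rewrite PE; congr (mu _ < _)%E.
  apply/seteqP; split => x /=; rewrite /xsection /= in_setE /E /= /h;
    move: (L N s x) => b; case: b; case: (pselect (A x)) => Ax;
    rewrite ?(mem_set Ax) ?(memNset Ax) /=;
    first [ by [] | by move=> _; left; split | by move=> _; right; split | by case=> [[]|[]] ].
have le : (e%:E <= \int[Qf P N]_x (P \o xsection E) x)%E.
  rewrite -[e%:E]mule1 -(probability_setT (Qf P N)) -integral_cst //.
  apply: ge0_le_integral => //.
    by move=> ? ?; rewrite /= lee_fin ltW.
    exact: measurable_fun_xsection.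
  move=> s _ /=; rewrite leNgt; apply/negP => H; apply: nH; by exists s.
move=> H; have := lt_le_trans H le; by rewrite ltxx.
Unshelve. all: by end_near.
Qed.

End Dense.

End PD.
Import PD.
Unset Implicit Arguments. Set Strict Implicit.

Module PCG.
Unset Printing Implicit Defensive.
Import Order.TTheory GRing.Theory Num.Theory.
Local Open Scope classical_set_scope.
Local Open Scope ring_scope.

Section CG.
Context d1 d (X : measurableType d1) (T : measurableType d).

Definition cgen (E : set (X * T)%type) := exists H : set (set T),
  [/\ countable H, H `<=` measurable & forall x, <<s H >> (xsection E x)].

Lemma cgen_all (E : set (X * T)%type) : measurable E -> cgen E.
Proof.
move: E; apply: smallest_sub; last first.
  move=> E [[B mB <-]|[B mB <-]].
    exists set0; split; [exact: countable0|by []|].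
    move=> x; case: (pselect (B x)) => Bx.
      have -> : xsection ([set: (X * T)%type] `&` fst @^-1` B) x = [set: T].
        by apply/seteqP; split => y //= _; rewrite /xsection /= inE.
      have [S0 SC _] := @smallest_sigma_algebra T setT set0.
      by have := SC _ S0; rewrite setD0.
    have -> : xsection ([set: (X * T)%type] `&` fst @^-1` B) x = (set0 : set T).
      by apply/seteqP; split => y //=; rewrite /xsection /= inE => -[].
    exact: sigma_algebra0.
  exists [set B]; split.
  - exact: countable1.
  - by move=> _ ->.
  - move=> x; rewrite setTI xsection_preimage_snd.
    by apply: sub_sigma_algebra.
split.
- exists set0; split; [exact: countable0|by []|].
  by move=> x; rewrite xsection0; exact: sigma_algebra0.
- move=> E [H [cH mH sH]]; exists H; split => // x.
  rewrite xsectionD.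
  have -> : xsection [set: (X * T)%type] x = [set: T].
    by apply/seteqP; split => y //= _; rewrite /xsection /= inE.
  exact: sigma_algebraCD.
- move=> F hF.
  have /choice [Hf HfP] : forall k, exists H : set (set T),
      [/\ countable H, H `<=` measurable & forall x, <<s H >> (xsection (F k) x)].
    exact: hF.
  exists (\bigcup_k Hf k); split.
  + apply: bigcup_countable; first exact: countableP.
    by move=> k _; case: (HfP k).
  + by move=> B [k _ HB]; case: (HfP k) => _ + _; apply.
  + move=> x; rewrite xsection_bigcup; apply: sigma_algebra_bigcup => k.
    case: (HfP k) => _ _ /(_ x).
    apply: sub_sigma_algebra2 => B HB; by exists k.
Qed.

End CG.

End PCG.
Import PCG.
Unset Implicit Arguments. Set Strict Implicit.

Module PAP.
Unset Printing Implicit Defensive.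
Import Order.TTheory GRing.Theory Num.Theory.
Local Open Scope classical_set_scope.
Local Open Scope ring_scope.

Section GA.
Context (T : Type) (G : set (set T)).

Lemma ga_sub A : G A -> gen_algebra G A.
Proof. by move=> GA F [GF _ _ _]; exact: GF. Qed.

Lemma ga_T : gen_algebra G setT.
Proof. by move=> F [_ FT _ _]. Qed.

Lemma ga_C A : gen_algebra G A -> gen_algebra G (~` A).
Proof. by move=> gA F hF; case: (hF) => GF FT FC FU; apply: FC; exact: gA. Qed.

Lemma ga_U A B : gen_algebra G A -> gen_algebra G B -> gen_algebra G (A `|` B).
Proof. by move=> gA gB F hF; case: (hF) => GF FT FC FU; apply: FU; [exact: gA|exact: gB]. Qed.

Lemma ga_0 : gen_algebra G set0.
Proof. by rewrite -setCT; apply: ga_C; exact: ga_T. Qed.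

End GA.

Lemma ga_measurable {d} {T : measurableType d} {G : set (set T)} :
  G `<=` measurable -> gen_algebra G `<=` measurable.
Proof.
move=> GM A gA; apply: gA; split => //.
- by move=> B mB; exact: measurableC.
- by move=> B C mB mC; exact: measurableU.
Qed.

Definition sd T (A B : set T) := (A `\` B) `|` (B `\` A).
Arguments sd {T}.

Lemma sd_tri T (A B C : set T) : sd A C `<=` sd A B `|` sd B C.
Proof.
move=> x; rewrite /sd /=; case: (pselect (B x)) => Bx; tauto.
Qed.

Lemma sdC T (A B : set T) : sd (~` A) (~` B) = sd A B.
Proof.
apply/seteqP; split => x; rewrite /sd /=; case: (pselect (A x)); case: (pselect (B x)); tauto.
Qed.

Lemma sd_measurable d (T : measurableType d) (A B : set T) :
  measurable A -> measurable B -> measurable (sd A B).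
Proof. by move=> mA mB; apply: measurableU; apply: measurableD. Qed.

Section AP.
Context d (T : measurableType d) (R : realType) (mu : probability T R).
Local Open Scope ereal_scope.

Lemma mu_sd_tri (A B C : set T) : measurable A -> measurable B -> measurable C ->
  mu (sd A C) <= mu (sd A B) + mu (sd B C).
Proof.
move=> mA mB mC.
apply: le_trans (measureU2 _ _ _); last 2 first.
- exact: sd_measurable.
- exact: sd_measurable.
apply: le_measure; rewrite ?inE; last exact: sd_tri.
- exact: sd_measurable.
- by apply: measurableU; exact: sd_measurable.
Qed.

Lemma ev_lt (u : nat -> \bar R) (e : R) : (0 < e)%R -> u @ \oo --> 0 ->
  exists N, u N < e%:E.
Proof.
move=> e0 /fine_cvgP [finN cv].
have ev := cvgr_lt 0 cv e e0; have {}ev := ev eventually_filter.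
have [N _ HN] : \forall n \near \oo, (u n \is a fin_num) /\ (fine (u n) < e)%R.
  by near=> n; split; [near: n; exact: finN|near: n; exact: ev].
have [finE ltE] := HN N (leqnn N).
by exists N; rewrite -(fineK finE) lte_fin.
Unshelve. all: by end_near.
Qed.

Lemma half_pos (e : R) : (0 < e)%R -> (0 < e / 2)%R.
Proof. by move=> e0; lra. Qed.

Lemma half_add (e : R) : ((e / 2)%:E + (e / 2)%:E = e%:E).
Proof. by rewrite -EFinD; congr EFin; lra. Qed.

Definition approx (H : set (set T)) (S : set T) := measurable S /\
  forall e : R, (0 < e)%R -> exists2 B, gen_algebra H B & mu (sd S B) < e%:E.

Lemma approxU H A B : H `<=` measurable -> approx H A -> approx H B -> approx H (A `|` B).
Proof.
move=> HM [mA aA] [mB aB]; split; first exact: measurableU.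
move=> e e0; have e20 := half_pos e e0.
have [A' gA hA] := aA _ e20; have [B' gB hB] := aB _ e20.
have mA' := ga_measurable HM _ gA; have mB' := ga_measurable HM _ gB.
exists (A' `|` B'); first exact: ga_U.
suff h1 : mu (sd (A `|` B) (A' `|` B')) <= mu (sd A A') + mu (sd B B').
  by apply: le_lt_trans h1 _; rewrite -half_add; exact: lteD.
apply: le_trans (measureU2 _ _ _); last 2 first.
- exact: sd_measurable.
- exact: sd_measurable.
apply: le_measure; rewrite ?inE.
- by apply: sd_measurable; apply: measurableU.
- by apply: measurableU; exact: sd_measurable.
move=> x; rewrite /sd /=; case: (pselect (A x)); case: (pselect (B x));
  case: (pselect (A' x)); case: (pselect (B' x)); tauto.
Qed.

Lemma approx_all H : H `<=` measurable -> forall S, <<s H >> S -> approx H S.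
Proof.
move=> HM; apply: smallest_sub; last first.
  move=> B HB; split; first exact: HM.
  move=> e e0; exists B; first exact: ga_sub.
  by rewrite /sd setDv setU0 measure0 lte_fin.
split.
- split => // e e0; exists set0; first exact: ga_0.
  by rewrite /sd setDv setU0 measure0 lte_fin.
- move=> S [mS aS]; rewrite setTD; split; first exact: measurableC.
  move=> e e0; have [B gB hB] := aS e e0; exists (~` B); first exact: ga_C.
  by rewrite sdC.
move=> F hF.
have mF k : measurable (F k) by case: (hF k).
pose U N := \bigcup_(k in `I_N) F k.
have mU N : measurable (U N) by apply: bigcup_measurable => k _; exact: mF.
have aU N : approx H (U N).
  elim: N => [|N IH].
    have -> : U 0%N = set0 by apply/seteqP; split => x // [k]. 
    split => // e e0; exists set0; first exact: ga_0.
    by rewrite /sd setDv setU0 measure0 lte_fin.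
  have -> : U N.+1 = U N `|` F N.
    apply/seteqP; split => x.
      move=> [k /= kN Fx]; rewrite ltnS leq_eqVlt in kN.
      case/orP: kN => [/eqP <-|kN]; [right|left; exists k] => //.
    by move=> [[k /= kN Fx]|Fx]; [exists k => //=; apply: ltnW | exists N => //=].
  exact: approxU.
have mS : measurable (\bigcup_k F k) by exact: bigcupT_measurable.
split => // e e0; have e20 := half_pos e e0.
have cv : (fun N => mu (\bigcup_k F k `\` U N)) @ \oo --> 0.
  have := @nonincreasing_cvg_mu _ _ _ mu (fun N => \bigcup_k F k `\` U N).
  have -> : \bigcap_N (\bigcup_k F k `\` U N) = set0.
    apply/seteqP; split => x // hx; have [[k _ Fx] _] := hx 0%N I.
    by have [_] := hx k.+1 I; apply; exists k => /=.
  rewrite measure0; apply.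
  - apply: le_lt_trans (probability_le1 mu _) (ltey _).
    by apply: measurableD => //.
  - by move=> N; apply: measurableD.
  - by [].
  - move=> n m nm; apply/subsetPset => x [Sx nUx]; split => // -[k /= km Fx].
    by apply: nUx; exists k => //=; apply: leq_trans km nm.
have [N HN] := ev_lt _ (e / 2) e20 cv.
have [B gB hB] := (aU N).2 _ e20.
have mB := ga_measurable HM _ gB.
exists B => //.
apply: le_lt_trans (mu_sd_tri _ _ _ mS (mU N) mB) _.
rewrite -half_add; apply: lteD => //.
suff -> : sd (\bigcup_k F k) (U N) = \bigcup_k F k `\` U N by [].
apply/seteqP; split => x; rewrite /sd /=; last by left.
case => // -[[k /= _ Fx] nS]; exfalso; apply: nS; by exists k.
Qed.

End AP.

End PAP.
Import PAP.
Unset Implicit Arguments. Set Strict Implicit.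

Module PFIN.
Unset Printing Implicit Defensive.
Import Order.TTheory GRing.Theory Num.Theory.
Local Open Scope classical_set_scope.
Local Open Scope ring_scope.

Lemma ga_bigcup (T : choiceType) (G : set (set T)) (D : set T) (f : T -> set T) :
  finite_set D -> (forall t, D t -> gen_algebra G (f t)) ->
  gen_algebra G (\bigcup_(t in D) f t).
Proof.
move=> fD hf; rewrite -bigsetU_fset_set //.
rewrite big_seq; apply: (big_ind (gen_algebra G)).
- exact: ga_0.
- by move=> A B; apply: ga_U.
- by move=> t; rewrite in_fset_set // inE; apply: hf.
Qed.

Section Fin.
Context d (T : measurableType d) (R : realType) (mu : probability T R).

Lemma maharam_finite : finite_set [set: T] -> maharam_type_le mu [set: T].
Proof.
move=> fT.
pose C (t s : T) : set T :=
  match pselect (exists B, [/\ measurable B, B t & ~ B s]) with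
  | left h => projT1 (cid h)
  | right _ => setT
  end.
have CP t s : [/\ measurable (C t s), C t s t &
    forall B, measurable B -> B t -> ~ B s -> ~ C t s s].
  rewrite /C; case: pselect => [h|nh].
    case: (cid h) => B [mB Bt nBs] /=; split => //.
  split => // B mB Bt nBs _; apply: nh; by exists B.
pose At t := \bigcap_(s in [set: T]) C t s.
have mAt t : measurable (At t).
  apply: fin_bigcap_measurable => // s _; by case: (CP t s).
have AtE B : measurable B -> B = \bigcup_(t in B) At t.
  move=> mB; apply/seteqP; split => x.
    move=> Bx; exists x => // s _; by case: (CP x s).
  move=> [t Bt Ax]; apply: contrapT => nBx.
  by case: (CP t x) => _ _ /(_ B mB Bt nBx); apply; apply: Ax.
exists (At @` setT); split.
- split; first by move=> _ [t _ <-].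
  move=> A mA e e0; exists A; last first.
    by rewrite setDv setU0 measure0 lte_fin.
  rewrite (AtE A mA); apply: ga_bigcup.
    exact: sub_finite_set fT.
  by move=> t _; apply: ga_sub; exists t.
- exact: card_image_le.
Qed.

End Fin.

End PFIN.
Import PFIN.
Unset Implicit Arguments. Set Strict Implicit.

Import Order.TTheory GRing.Theory Num.Theory.
Local Open Scope classical_set_scope.

Theorem mainTheorem4 (d : measure_display) (T : measurableType d) (R : realType)
  (mu : probability T R) :
  (exists L : learning_rule T, is_learning_rule L /\ universally_consistent mu L) ->
  maharam_type_le mu [set: T].
Proof.
move=> [L [hL hC]].
case: (pselect (finite_set [set: T])) => [fT|iT]; first exact: maharam_finite.
have /choice [Hn HnP] : forall n, exists H : set (set T),
    [/\ countable H, H `<=` measurable &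
      forall x, <<s H >> (xsection [set p : (n.-tuple (T * bool) * T)%type | L n p.1 p.2] x)].
  move=> n; apply: cgen_all.
  have := hL n measurableT [set true] I; rewrite setTI.
  by congr measurable; apply/seteqP; split => p /=.
exists (\bigcup_n Hn n); split.
- split.
    by move=> B [n _ HB]; case: (HnP n) => _ + _; apply.
  move=> A mA e e0.
  have e20 := half_pos _ e e0.
  have [n [s hs]] := dense_rule _ _ _ mu L hL hC A mA _ e20.
  have [_ _ /(_ s) sB] := HnP n.
  have HM : \bigcup_n Hn n `<=` measurable.
    by move=> B [k _ HB]; case: (HnP k) => _ + _; apply.
  have [_ aB] := approx_all _ _ _ mu _ HM _ (sub_sigma_algebra2 (fun B HB => ex_intro2 _ _ n I HB) sB).
  have [B gB hB] := aB _ e20.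
  exists B => //.
  have mB0 := rule_sec_measurable _ _ L hL n s.
  have mB := ga_measurable HM _ gB.
  have eq0 : xsection [set p : (n.-tuple (T * bool) * T)%type | L n p.1 p.2] s = [set x | L n s x].
    by apply/seteqP; split => x; rewrite /xsection /= inE.
  rewrite eq0 in hB.
  apply: le_lt_trans (mu_sd_tri _ _ _ mu _ _ _ mA mB0 mB) _.
  by rewrite -(half_add R e); apply: lteD.
- apply: (@card_le_trans _ _ _ [set: nat]).
    apply: bigcup_countable; first exact: countableP.
    by move=> k _; case: (HnP k).
  by apply/infiniteP.
Qed.
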